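(* Let $n_1,\dots,n_t\ge 0$ be integers and let $G=K_{n_1\times 1,\,n_2\times 2,\,\dots,\,n_t\times t}$ be the complete $(n_1+\dots+n_t)$-partite graph having exactly $n_i$ parts of size $i$ for each $1\le i\le t$. Then $\binom{IDI(G)}{i}\ge n_i$ for every $1\le i\le t$.
   Context: For a finite simple connected graph $G=(V,E)$ with diameter $d$, a rank assignment is a function $f:V\to\mathbb{R}$; under $f$, the string of a vertex $v$ is the $d$-vector whose $i$-th coordinate is the sum of $f(w)$ over all vertices $w$ with $d(v,w)=i$. The ID-index $IDI(G)$ is the minimum $k$ such that there exists $f:V\to\mathbb{R}$ with $|f(V)|=k$ under which all vertices have distinct strings. *)

(* Defs.v *)
From Stdlib Require Import Reals.
From mathcomp Require Import all_boot all_order all_algebra.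
From mathcomp Require Import Rstruct.

Set Implicit Arguments.
Unset Strict Implicit.
Unset Printing Implicit Defensive.

Section GraphNotions.
Variables (V : finType) (e : rel V).

Fixpoint gball (d : nat) (x : V) : {set V} :=
  if d is d'.+1 then gball d' x :|: [set y | [exists z in gball d' x, e z y]]
  else [set x].

(* graph distance: least d (< #|V|) with y in the ball of radius d around x;
   this is the usual distance whenever the graph is connected *)
Definition gdist (x y : V) : nat :=
  find (fun d => y \in gball d x) (iota 0 #|V|).

Definition gconnected : Prop := forall x y : V, connect e x y.

Definition gdiam : nat := \max_(x : V) \max_(y : V) gdist x y.

(* string of v under rank assignment f: i-th coordinate (i = 1..diam) is the
   sum of f(w) over vertices w at distance i from v *)
Definition gstring (f : V -> R) (v : V) : {ffun 'I_gdiam -> R} :=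
  [ffun i : 'I_gdiam => (\sum_(w | gdist v w == i.+1) f w)%R].

Definition num_ranks (f : V -> R) : nat := size (undup [seq f v | v <- enum V]).

Definition IDI_achievable (k : nat) : Prop :=
  exists f : V -> R, num_ranks f = k /\ injective (gstring f).

Definition is_IDI (k : nat) : Prop :=
  IDI_achievable k /\ forall k', IDI_achievable k' -> k <= k'.

End GraphNotions.

Definition complete_multipartite (V : finType) (P : {set {set V}}) : rel V :=
  fun x y => pblock P x != pblock P y.

(* Main.v *)
Require Import Defs.
From Stdlib Require Import Reals.
From mathcomp Require Import all_boot all_order all_algebra.
From mathcomp Require Import Rstruct.
Import GRing.Theory.

Lemma find_iota0 (p : pred nat) n d : d < n -> p d ->
  (forall d', d' < d -> ~~ p d') -> find p (iota 0 n) = d.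
Proof.
move=> hd pd hp; rewrite -(subnKC (ltnW hd)) iotaD find_cat.
have -> : has p (iota 0 d) = false.
  by apply/hasPn => x; rewrite mem_iota => /andP[_ hx]; exact: hp.
rewrite size_iota; case E: (n - d) => [|m]; first by move/eqP: E; rewrite subn_eq0 leqNgt hd.
by rewrite /= add0n pd addn0.
Qed.

Section S.
Variables (V : finType) (P : {set {set V}}).
Hypothesis hP : partition P [set: V].
Let e := complete_multipartite P.

Lemma covP x : x \in cover P.
Proof. by case/and3P: hP => /eqP ->. Qed.
Lemma tIP : trivIset P.
Proof. by case/and3P: hP. Qed.

Lemma inpb v x : (x \in pblock P v) = (pblock P x == pblock P v).
Proof. by rewrite eq_sym eq_pblock ?covP // tIP. Qed.

Lemma gb0 v y : (y \in gball e 0 v) = (y == v).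
Proof. by rewrite /= inE. Qed.

Lemma gb1 v y : (y \in gball e 1 v) = (y == v) || e v y.
Proof.
rewrite /= !inE; congr (_ || _); apply/existsP/idP => [[z /andP[]]|h].
  by rewrite inE => /eqP ->.
by exists v; rewrite inE eqxx.
Qed.

Lemma gdistE v y u : pblock P u != pblock P v ->
  gdist e v y = if y == v then 0 else if pblock P y == pblock P v then 2 else 1.
Proof.
move=> hu; rewrite /gdist.
have huv : u != v by apply: contraNneq hu => ->.
case: eqP => [->|/eqP hyv].
  apply: find_iota0 => //; last by rewrite gb0.
  by apply/card_gt0P; exists v.
case: ifP => hb.
  apply: find_iota0.
  - apply/card_gt2P; exists y, v, u; split => //; split => //; first by rewrite eq_sym.
    by apply: contraNneq hu => ->.
  - have h1 : u \in gball e 1 v by rewrite gb1 /e /complete_multipartite (eq_sym (pblock P v)) hu orbT.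
    rewrite /= inE; apply/orP; right; rewrite inE; apply/existsP; exists u.
    apply/andP; split; first exact: h1.
    by rewrite /e /complete_multipartite (eqP hb).
  - case=> [|[|//]] _; first by rewrite gb0.
    by rewrite gb1 (negPf hyv) /e /complete_multipartite (eqP hb) eqxx.
apply: find_iota0.
- by apply/card_gt1P; exists y, v.
- by rewrite gb1 /e /complete_multipartite (eq_sym (pblock P v)) hb orbT.
- by case=> // _; rewrite gb0.
Qed.

Variable f : V -> R.
Let S (B : {set V}) := (\sum_(x in B) f x)%R.
Let tot := (\sum_x f x)%R.

Lemma sum_dist v u m : pblock P u != pblock P v ->
  (\sum_(x | gdist e v x == m) f x = if m == 0 then f v else if m == 1 then tot - S (pblock P v)
     else if m == 2 then S (pblock P v) - f v else 0)%R.
Proof.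
move=> hu.
rewrite (eq_bigl (fun x => (if x == v then 0 else if pblock P x == pblock P v then 2 else 1) == m)); last first.
  by move=> x; rewrite (@gdistE v x u hu).
case: m => [|[|[|m]]] /=.
- rewrite (eq_bigl (pred1 v)) ?big_pred1_eq // => x /=.
  by case: (x == v) => //; case: ifP.
- have -> : tot = (S (pblock P v) + \sum_(x | x \notin pblock P v) f x)%R by rewrite /tot (bigID (fun x => x \in pblock P v)).
  rewrite addrAC subrr add0r.
  apply: eq_bigl => x; rewrite inpb.
  case: (x =P v) => [->|_]; first by rewrite eqxx.
  by case: ifP.
- have -> : S (pblock P v) = (f v + \sum_(x in pblock P v | x != v) f x)%R.
    by rewrite /S (bigD1 v) // mem_pblock covP.
  rewrite addrAC subrr add0r; apply: eq_bigl => x; rewrite inpb.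
  by case: (x == v); rewrite ?andbF ?andbT //=; case: ifP.
- by rewrite big_pred0 // => x; case: (x == v) => //; case: ifP.
Qed.
End S.

Lemma edgeless_eq (V : finType) (e : rel V) :
  (forall x y, e x y = false) -> gconnected e -> forall x y : V, x = y.
Proof.
move=> he hc x y; case/connectP: (hc x y) => [[|z p]] /=; first by move=> _ ->.
by rewrite he.
Qed.

Theorem mainTheorem14 (t : nat) (n : nat -> nat) (V : finType)
    (P : {set {set V}}) (k : nat) :
  partition P [set: V] ->
  (forall B, B \in P -> #|B| <= t) ->
  (forall i, 1 <= i <= t -> #|[set B in P | #|B| == i]| = n i) ->
  gconnected (complete_multipartite P) ->
  is_IDI (complete_multipartite P) k ->
  forall i, 1 <= i <= t -> n i <= 'C(k, i).
Proof.
move=> hP _ hn hconn [[f [hk hinj]] _] i /andP[i1 it].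
rewrite -(hn i) ?i1 ?it // -hk.
have tI := @tIP _ _ hP.
have Q : forall v w, f v = f w ->
    (\sum_(x in pblock P v) f x = \sum_(x in pblock P w) f x)%R -> v = w.
  move=> v w hf hS.
  have noedge : forall v0, (forall u, (pblock P u != pblock P v0) = false) -> v = w.
    move=> v0 hno.
    have he : forall x y, complete_multipartite P x y = false.
      move=> x y; rewrite /complete_multipartite.
      by move: (hno x) (hno y) => /negbFE/eqP -> /negbFE/eqP ->; rewrite eqxx.
    exact: (@edgeless_eq _ _ he hconn v w).
  have [u hu|hno] := pickP (fun u => pblock P u != pblock P v); last exact: (noedge v).
  have [u' hu'|hno'] := pickP (fun u => pblock P u != pblock P w); last exact: (noedge w).
  apply: hinj; apply/ffunP => j; rewrite !ffunE.
  by rewrite (@sum_dist _ _ hP f v u j.+1 hu) (@sum_dist _ _ hP f w u' j.+1 hu') hf hS.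
set s := undup [seq f v | v <- enum V].
have gP : forall v, index (f v) s < size s.
  by move=> v; rewrite index_mem mem_undup map_f ?mem_enum.
pose g v : 'I_(size s) := Ordinal (gP v).
have hg : forall v, nth 0%R s (g v) = f v.
  by move=> v; rewrite /= nth_index // mem_undup map_f ?mem_enum.
have geq : forall v w, g v = g w -> f v = f w.
  by move=> v w /(congr1 (fun a : 'I__ => nth 0%R s a)); rewrite !hg.
have ginjB : forall B, B \in P -> {in B &, injective g}.
  move=> B hB x y hx hy /geq hf; apply: Q hf _.
  by rewrite (def_pblock tI hB hx) (def_pblock tI hB hy).
have h0 : set0 \notin P by case/and3P: hP.
have hS : forall B, B \in P ->
    (\sum_(x in B) f x = \sum_(a in g @: B) nth 0%R s a)%R.
  move=> B hB; rewrite big_imset /=; last exact: ginjB.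
  by apply: eq_bigr => x _; rewrite hg.
rewrite /num_ranks -/s -[size s]card_ord -card_draws.
set A := [set B in P | #|B| == i].
have injphi : {in A &, injective (fun B : {set V} => g @: B)}.
  move=> B B'; rewrite !inE => /andP[hB _] /andP[hB' _] /= heq.
  have [v hv] : exists v, v \in B.
    by apply/set0Pn; apply: contraNneq h0 => <-.
  have : g v \in g @: B' by rewrite -heq imset_f.
  case/imsetP => w hw /geq hf.
  have vw : v = w.
    apply: Q hf _.
    by rewrite (def_pblock tI hB hv) (def_pblock tI hB' hw) (hS _ hB) (hS _ hB') heq.
  by rewrite -(def_pblock tI hB hv) -(def_pblock tI hB' hw) vw.
rewrite -(card_in_imset injphi); apply: subset_leq_card; apply/subsetP => _ /imsetP[B hB ->].
move: hB; rewrite !inE => /andP[hB hi].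
by rewrite (card_in_imset (ginjB B hB)).
Qed.
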